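(* For every $\alpha \in (0,1)$ and every $A > 0$ there exists $C = C(\alpha, A)$ such that the following holds. Let $m \ge 4$ be an integer and let $b = (b_1,\ldots,b_m) \in \mathbb{R}^m$ satisfy $\|b\|_{1,\infty} \le 1$ and $\|b\|_1 \ge C (\log\log m)^2$. Then there exist a positive integer $l$ with $A \log\log m \le l \le \log m$ and a subset $I_1 \subseteq [m]$ such that the following holds: for every vector $\lambda = (\lambda_i)_{i \in I_1}$ with $\|\lambda\|_1 \le 1$ there exists a subset $I_2 \subseteq I_1$ such that, writing $n_1 := |I_1|$ and $n_2 := |I_2|$, (i) $2^{l/2} \le \frac{m}{n_1} \le \frac{m}{n_2} \le \big(\frac{m}{n_1}\big)^{1+\alpha}$; (ii) $|b_i| \ge \frac{1}{l n_1}$ for all $i \in I_1$, and $|b_i| \ge \frac{1}{l n_2}$ and $|b_i| \ge 2|\lambda_i|$ for all $i \in I_2$.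
   Context: $[m] = \{1,\ldots,m\}$. For a finite sequence $a = (a_i)$, $(|a|^*_i)$ denotes the non-increasing rearrangement of $(|a_i|)$; the weak $\ell_1$ norm $\|a\|_{1,\infty}$ is the infimum of $M > 0$ such that $|a|^*_i \le M i^{-1}$ for all $i$. $\|a\|_1 = \sum_i |a_i|$. All logarithms are to base $2$. *)

(* Defs.v *)
From HB Require Import structures.
From mathcomp Require Import all_boot all_order all_algebra.
From mathcomp Require Import all_classical all_reals all_analysis.
Set Implicit Arguments. Unset Strict Implicit. Unset Printing Implicit Defensive.
Import Order.TTheory GRing.Theory Num.Theory.
Local Open Scope ring_scope.
Local Open Scope classical_set_scope.

Definition log2 {R : realType} (x : R) : R := ln x / ln 2.

Definition rearr {R : realType} {m : nat} (a : 'I_m -> R) : seq R :=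
  sort (fun x y : R => y <= x) [seq `|a i| | i <- enum 'I_m].

(* |a|^*_i for i = 1..m  (1-based) *)
Definition rearr_at {R : realType} {m : nat} (a : 'I_m -> R) (i : nat) : R :=
  nth 0 (rearr a) i.-1.

Definition weak_l1_norm {R : realType} {m : nat} (a : 'I_m -> R) : R :=
  inf [set M : R | 0 < M /\ forall i : nat, (1 <= i <= m)%N ->
        rearr_at a i <= M / i%:R].

Definition l1_norm {R : realType} {m : nat} (a : 'I_m -> R) : R :=
  \sum_(i < m) `|a i|.

(* Main.v *)
Require Import Defs.
From HB Require Import structures.
From mathcomp Require Import all_boot all_order all_algebra.
From mathcomp Require Import all_classical all_reals all_analysis.
From mathcomp Require Import ring lra zify.
Import Order.TTheory GRing.Theory Num.Theory.
Local Open Scope ring_scope.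

Lemma card_count (T : finType) (P : pred T) :
  #|[set i | P i]| = count P (enum T).
Proof.
rewrite cardE /enum_mem size_filter /= (@eq_filter _ _ predT) // filter_predT.
by apply: eq_count => i /=; rewrite inE.
Qed.

Lemma sorted_count (R : realType) (s : seq R) (t : R) (k : nat) :
  sorted (fun x y : R => y <= x) s -> (0 < k)%N ->
  (k <= count (fun x : R => (t <= x)%R) s)%N -> t <= nth 0 s k.-1.
Proof.
move=> ss k0 kc; rewrite leNgt; apply/negP => lt.
have ks : (k.-1 < size s)%N.
  by apply: (leq_trans _ (leq_trans kc (count_size _ _))); rewrite prednK.
have hd : count (fun x : R => (t <= x)%R) (drop k.-1 s) = 0%N.
  apply/eqP; rewrite -leqn0 leqNgt -has_count; apply/negP => /(has_nthP 0) [j].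
  rewrite size_drop nth_drop => jl.
  have := sorted_leq_nth (fun y x z : R => fun (h1 : y <= x) (h2 : z <= y) => le_trans h2 h1)
     (fun x => lexx x) 0 ss.
  move=> /(_ k.-1 (k.-1 + j)%N); rewrite !inE ks -ltn_subRL jl => /(_ isT isT (leq_addr _ _)) h.
  by move=> /le_trans/(_ h); rewrite leNgt lt.
move: kc; rewrite -(cat_take_drop k.-1 s) count_cat hd addn0.
move=> /(leq_trans)/(_ (count_size _ _)); rewrite size_take ks.
by rewrite -ltnS prednK // ltnn.
Qed.

Lemma rearr_at_le_sum (R : realType) (m : nat) (b : 'I_m -> R) i :
  rearr_at b i <= \sum_(j < m) `|b j|.
Proof.
rewrite /rearr_at; case: (ltnP i.-1 (size (rearr b))) => h; last first.
  by rewrite nth_default // sumr_ge0.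
have : nth 0 (rearr b) i.-1 \in rearr b by apply: mem_nth.
rewrite /rearr mem_sort => /mapP [j _ ->].
by rewrite (bigD1 j) //= lerDl sumr_ge0.
Qed.

Lemma weak_rearr (R : realType) (m : nat) (b : 'I_m -> R) :
  weak_l1_norm b <= 1 -> forall i, (1 <= i <= m)%N -> rearr_at b i * i%:R <= 1.
Proof.
move=> hw i /andP [i1 im].
set S := [set M : R | 0 < M /\ forall i : nat, (1 <= i <= m)%N ->
        rearr_at b i <= M / i%:R]%classic.
have hS : has_inf S.
  split.
    exists ((1 + \sum_(j < m) `|b j|) * (m%:R + 1)); split.
      by apply: mulr_gt0; rewrite (lt_le_trans ltr01) // ?lerDl ?lerDr ?sumr_ge0.
    move=> j /andP [j1 jm].
    have j0 : (0 : R) < j%:R by rewrite ltr0n.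
    apply: le_trans (rearr_at_le_sum _ _ b j) _.
    rewrite ler_pdivlMr //; apply: ler_pM.
    - exact: sumr_ge0.
    - exact: ler0n.
    - by rewrite lerDr.
    - by apply: (le_trans (y := m%:R)); [rewrite ler_nat | rewrite lerDl].
  by exists 0 => M [] /ltW.
have i0 : (0 : R) < i%:R by rewrite ltr0n.
apply/ler_addgt0Pr => e e0.
have [M [M0 HM] Me] := inf_adherent e0 hS.
have := HM i; rewrite i1 im => /(_ isT); rewrite ler_pdivlMr // => h.
apply: (le_trans h); apply: ltW; apply: (lt_le_trans Me).
by rewrite lerD2r.
Qed.

Lemma weak_card (R : realType) (m : nat) (b : 'I_m -> R) :
  weak_l1_norm b <= 1 -> forall t : R, 0 < t ->
  #|[set i | t <= `|b i|]|%:R * t <= 1.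
Proof.
move=> hw t t0; set k := #|_|.
case: (posnP k) => k0; first by rewrite k0 mul0r.
have km : (k <= m)%N by rewrite -[m]card_ord max_card.
have := @weak_rearr _ _ _ hw k; rewrite k0 km => /(_ isT) h.
apply: le_trans h; rewrite mulrC ler_wpM2r //.
rewrite /rearr_at; apply: sorted_count => //.
  apply: sort_sorted => x y; exact: le_total.
rewrite /rearr.
have -> : count (fun x : R => (t <= x)%R) (sort (fun x y : R => y <= x) [seq `|b i| | i <- enum 'I_m])
  = count (fun x : R => (t <= x)%R) [seq `|b i| | i <- enum 'I_m].
  by apply/permP; rewrite perm_sort perm_refl.
by rewrite count_map /k card_count.
Qed.

Definition tau (R : realType) (p D : nat) : R := 2 ^+ D / 2 ^+ p.
Definition shell (R : realType) (m : nat) (b : 'I_m -> R) (p D : nat) : {set 'I_m} :=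
  [set i | (tau R p D < `|b i|) && (`|b i| <= tau R p D.+1)].
Arguments shell {R m} b p D.
Definition vv (R : realType) (m : nat) (b : 'I_m -> R) (p D : nat) : R :=
  #|shell b p D|%:R * tau R p D.
Arguments vv {R m} b p D.

Lemma tau_gt0 (R : realType) p D : 0 < tau R p D.
Proof. by rewrite /tau divr_gt0 // exprn_gt0. Qed.

Lemma tau2_ge0 (R : realType) p D : 0 <= 2 * tau R p D.
Proof. by rewrite mulr_ge0 // ltW // tau_gt0. Qed.

Lemma tauS (R : realType) p D : tau R p D.+1 = 2 * tau R p D.
Proof. by rewrite /tau exprS mulrA. Qed.

Lemma taupp (R : realType) p : tau R p p = 1.
Proof. by rewrite /tau divff // expf_neq0. Qed.

Lemma tau_le (R : realType) p D E : (D <= E)%N -> tau R p D <= tau R p E.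
Proof.
move=> h; rewrite /tau ler_pM2r ?invr_gt0 ?exprn_gt0 //.
by rewrite ler_eXn2l // ltr1n.
Qed.

Lemma tau_lt (R : realType) p D E : (D < E)%N -> tau R p D < tau R p E.
Proof.
move=> h; rewrite /tau ltr_pM2r ?invr_gt0 ?exprn_gt0 //.
by rewrite ltr_eXn2l // ltr1n.
Qed.

Lemma absb_le1 (R : realType) (m : nat) (b : 'I_m -> R) :
  (forall t : R, 0 < t -> #|[set i | t <= `|b i|]|%:R * t <= 1) ->
  forall i, `|b i| <= 1.
Proof.
move=> hw i; case: (ltrP 0 `|b i|) => h; last by rewrite (le_trans h).
have := hw _ h.
have : (1 <= #|[set j | (`|b i| <= `|b j|)%R]|)%N.
  by rewrite card_gt0; apply/set0Pn; exists i; rewrite inE.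
rewrite -(ler_nat R) => h1 h2; apply: le_trans h2.
by rewrite -{1}(mul1r `|b i|) ler_wpM2r.
Qed.

Lemma vv_ge0 (R : realType) (m : nat) (b : 'I_m -> R) p D : 0 <= vv b p D.
Proof. by rewrite /vv mulr_ge0 // ltW // tau_gt0. Qed.

Lemma vv_le1 (R : realType) (m : nat) (b : 'I_m -> R) p D :
  (forall t : R, 0 < t -> #|[set i | t <= `|b i|]|%:R * t <= 1) ->
  vv b p D <= 1.
Proof.
move=> hw; apply: le_trans (hw _ (tau_gt0 R p D)).
rewrite /vv; apply: ler_wpM2r; first exact: (ltW (tau_gt0 _ _ _)).
rewrite ler_nat; apply: subset_leq_card.
by apply/fintype.subsetP => i; rewrite !inE => /andP [/ltW].
Qed.

Lemma find_shell (R : realType) p n (x : R) :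
  tau R p 0 < x -> x <= tau R p n -> exists2 D, (D < n)%N &
    tau R p D < x /\ x <= tau R p D.+1.
Proof.
move=> h0; elim: n => [|n IH] hn; first by rewrite ltNge hn in h0.
case: (leP x (tau R p n)) => h; first by have [D D1 D2] := IH h; exists D => //; apply: ltnW.
by exists n.
Qed.

Lemma e1 (R : realType) p : 1 <= tau R p p.
Proof. by rewrite taupp. Qed.

Lemma mulrn_aux (R : realType) (x : R) n : 2 * x *+ n <= 2 * (n%:R * x).
Proof. rewrite -mulr_natr (_ : 2 * x * n%:R = 2 * (n%:R * x)) //; ring. Qed.

Lemma mass_bound (R : realType) (m : nat) (b : 'I_m -> R) p :
  (forall t : R, 0 < t -> #|[set i | t <= `|b i|]|%:R * t <= 1) ->
  \sum_(i < m) `|b i| <= 2 * \sum_(D < p) vv b p D + m%:R * tau R p 0.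
Proof.
move=> hw.
have step : forall i, `|b i| <= (if `|b i| <= tau R p 0 then tau R p 0 else 0) +
   \sum_(D < p) (if i \in shell b p D then 2 * tau R p D else 0).
  move=> i.
  have s0 : 0 <= \sum_(D < p) (if i \in shell b p D then 2 * tau R p D else 0).
    by apply: sumr_ge0 => D _; case: ifP => // _; apply: tau2_ge0.
  case: (leP `|b i| (tau R p 0)) => h; first by rewrite -[X in X <= _]addr0 lerD.
  have [D Dp [D1 D2]] := @find_shell _ p p _ h (le_trans (absb_le1 _ _ _ hw i) (e1 R p)).
  rewrite add0r (bigD1 (Ordinal Dp)) //= inE D1 D2 /= -tauS.
  apply: (le_trans D2); rewrite lerDl; apply: sumr_ge0 => E _; case: ifP => // _; apply: tau2_ge0.
apply: (le_trans (ler_sum _ (fun i _ => step i))).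
rewrite big_split /= addrC; apply: lerD.
  rewrite exchange_big /= mulr_sumr; apply: ler_sum => D _.
  rewrite -big_mkcond /= sumr_const /vv.
  exact: mulrn_aux.
apply: (@le_trans _ _ (\sum_(i < m) tau R p 0)).
  by apply: ler_sum => i _; case: ifP => // _; exact: ltW (tau_gt0 _ _ _).
by rewrite sumr_const card_ord mulr_natl.
Qed.

Lemma shell_uniq (R : realType) (m : nat) (b : 'I_m -> R) p D D' i :
  i \in shell b p D -> i \in shell b p D' -> D = D'.
Proof.
rewrite !inE => /andP [h1 h2] /andP [h3 h4].
case: (ltngtP D D') => // h.
  by have := le_lt_trans (le_trans h2 (tau_le R p D.+1 D' h)) h3; rewrite ltxx.
by have := le_lt_trans (le_trans h4 (tau_le R p D'.+1 D h)) h1; rewrite ltxx.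
Qed.

Definition mu (R : realType) (m : nat) (b : 'I_m -> R) p (I1 : {set 'I_m})
  (lam : 'I_m -> R) D : R :=
  \sum_(i < m) (if (i \in I1) && (i \in shell b p D) then `|lam i| else 0).
Arguments mu {R m} b p I1 lam D.

Lemma mu_disj (R : realType) (m : nat) (b : 'I_m -> R) p I1 lam E K :
  \sum_(t < K) mu b p I1 lam (E + t) <= \sum_(i in I1) `|lam i|.
Proof.
rewrite /mu exchange_big /= [X in _ <= X]big_mkcond /=; apply: ler_sum => i _.
case: ifP => hi /=; last by rewrite big1 // => t _.
case: (boolp.pselect (exists t : 'I_K, i \in shell b p (E + t))) => [[t0 ht0]|hn].
  rewrite (bigD1 t0) //= ht0 big1 ?addr0 // => t tt0.
  case: ifP => // ht; move: tt0; have := shell_uniq _ _ _ _ _ _ _ ht0 ht.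
  by move/eqP; rewrite eqn_add2l => /eqP/val_inj ->; rewrite eqxx.
rewrite big1 // => t _; case: ifP => // ht; case: hn; by exists t.
Qed.

Lemma bad_bound (R : realType) (m : nat) (b : 'I_m -> R) p (I1 : {set 'I_m}) (lam : 'I_m -> R) D :
  {subset shell b p D <= I1} ->
  #|shell b p D :\: [set i | 2 * `|lam i| <= `|b i|]|%:R * tau R p D
    <= 2 * mu b p I1 lam D.
Proof.
move=> sub.
rewrite mulr_natl -sumr_const big_mkcond /mu mulr_sumr /=; apply: ler_sum => i _.
case: ifP => hB; last first.
  by case: ifP => _; rewrite ?mulr0 // mulr_ge0.
move: hB; rewrite !inE => /andP [h1 /andP [h2 h3]].
have hs : i \in shell b p D by rewrite inE h2 h3.
rewrite (sub _ hs) /= h2 h3 /=; apply: ltW; apply: (lt_trans h2).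
by rewrite ltNge.
Qed.

Lemma part_i (R : realType) (alpha : R) (m n1 n2 l k D1 D p : nat) :
  (2 ^ p <= m)%N -> 0 <= alpha -> (0 < n1)%N -> (0 < n2)%N -> (n2 <= n1)%N -> (0 < l)%N ->
  n1%:R * tau R p D1 <= 1 -> 1 / l%:R <= n2%:R * tau R p D ->
  (D1 <= D)%N -> (l <= D1)%N -> (l * 2 ^ (D - D1) <= 2 ^ (2 ^ k.+1))%N ->
  (2 ^ k.+1)%:R <= D1%:R * alpha ->
  [/\ powR (2 : R) (l%:R / 2) <= m%:R / n1%:R, (m%:R / n1%:R : R) <= m%:R / n2%:R &
      m%:R / n2%:R <= powR (m%:R / n1%:R) (1 + alpha)].
Proof.
move=> hm a0 n10 n20 n21 l0 hn1 hn2 hD hl hk ha.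
have p0 : (0 < 2 ^ p)%N by rewrite expn_gt0.
have m0 : (0 : R) < m%:R by rewrite ltr0n (leq_trans p0 hm).
have n1R : (0 : R) < n1%:R by rewrite ltr0n.
have n2R : (0 : R) < n2%:R by rewrite ltr0n.
have lR : (0 : R) < l%:R by rewrite ltr0n.
have t1 := tau_gt0 R p D1.
set X := m%:R / n1%:R.
have X0 : 0 < X by rewrite divr_gt0.
have hX : m%:R * tau R p D1 <= X.
  rewrite /X ler_pdivlMr // -mulrA [tau R p D1 * _]mulrC.
  by rewrite -{2}(mulr1 m%:R) ler_wpM2l // ltW.
have h2 : 2 ^+ D1 <= m%:R * tau R p D1.
  rewrite /tau mulrCA -{1}(mulr1 (2 ^+ D1)) ler_wpM2l ?exprn_ge0 //.
  by rewrite ler_pdivlMr ?exprn_gt0 // mul1r -natrX ler_nat.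
have hX2 := le_trans h2 hX.
split.
- apply: le_trans hX2; rewrite -powR_mulrn //; apply: ler_powR; first by rewrite ler1n.
  rewrite (le_trans _ (_ : l%:R <= D1%:R)) ?ler_nat //.
  by rewrite ler_pdivrMr // ler_peMr // ?ler1n.
- by rewrite ler_wpM2l // lef_pV2 ?posrE // ler_nat.
have hc : m%:R / n2%:R <= m%:R * l%:R * tau R p D.
  have h1 : 1 <= l%:R * (n2%:R * tau R p D).
    by move: (ler_wpM2l (ltW lR) hn2); rewrite mul1r divff // gt_eqF.
  rewrite ler_pdivrMr // -{1}(mulr1 m%:R).
  rewrite (_ : m%:R * l%:R * tau R p D * n2%:R = m%:R * (l%:R * (n2%:R * tau R p D))); last by ring.
  by rewrite ler_wpM2l // ltW.
apply: le_trans hc _.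
have tD : tau R p D = tau R p D1 * 2 ^+ (D - D1).
  by rewrite /tau mulrAC -exprD subnKC.
have hk' : l%:R * 2 ^+ (D - D1) <= (2 : R) ^+ (2 ^ k.+1).
  by rewrite -natrX -natrM -natrX ler_nat.
have hpa : (2 : R) ^+ (2 ^ k.+1) <= powR X alpha.
  apply: (le_trans _ (ge0_ler_powR a0 _ _ hX2)); last 2 first.
  - by rewrite nnegrE exprn_ge0.
  - by rewrite nnegrE ltW.
  rewrite -powR_mulrn // -[(2:R) ^+ D1]powR_mulrn // -powRrM; apply: ler_powR => //.
  by rewrite ler1n.
rewrite powRD; last by apply/implyP => _; rewrite (gt_eqF X0).
rewrite powRr1; last exact: ltW X0.
rewrite tD (_ : m%:R * l%:R * (tau R p D1 * 2 ^+ (D - D1)) =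
   (m%:R * tau R p D1) * (l%:R * 2 ^+ (D - D1))); last by ring.
apply: ler_pM => //. all: try (by rewrite mulr_ge0 // ltW). exact: le_trans hk' hpa.
Qed.

Definition GoodI (R : realType) (alpha : R) (m : nat) (b : 'I_m -> R) (l : nat)
  (I1 : {set 'I_m}) : Prop :=
          forall lambda : 'I_m -> R,
            \sum_(i in I1) `|lambda i| <= 1 ->
            exists I2 : {set 'I_m},
              [/\ I2 \subset I1,
                  [/\ powR (2 : R) (l%:R / 2) <= m%:R / #|I1|%:R,
                       (m%:R / #|I1|%:R : R) <= m%:R / #|I2|%:R &
                       m%:R / #|I2|%:R <= powR (m%:R / #|I1|%:R : R) (1 + alpha)] &
                  [/\ (forall i, i \in I1 -> (1 / (l%:R * #|I1|%:R) : R) <= `|b i|),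
                       (forall i, i \in I2 -> (1 / (l%:R * #|I2|%:R) : R) <= `|b i|) &
                       (forall i, i \in I2 -> 2 * `|lambda i| <= `|b i|)]].
Arguments GoodI {R} alpha {m} b l I1.

Lemma inv_bound (R : realType) (l n : nat) (t : R) :
  (0 < l)%N -> (0 < n)%N -> 1 / l%:R <= n%:R * t -> 1 / (l%:R * n%:R) <= t.
Proof.
move=> l0 n0 h.
have lR : (0:R) < l%:R by rewrite ltr0n.
have nR : (0:R) < n%:R by rewrite ltr0n.
rewrite ler_pdivrMr ?mulr_gt0 //.
move: (ler_wpM2l (ltW lR) h); rewrite mul1r divff ?gt_eqF // => h1.
by rewrite (le_trans h1) // le_eqVlt; apply/orP; left; apply/eqP; ring.
Qed.

Lemma good_window (R : realType) (alpha : R) (m : nat) (b : 'I_m -> R) (p N k E : nat) :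
  (forall t : R, 0 < t -> #|[set i | t <= `|b i|]|%:R * t <= 1) ->
  (2 ^ p <= m)%N -> 0 <= alpha -> 2 <= alpha * N%:R -> (0 < N)%N ->
  (N * 2 ^ k <= 2 ^ (2 ^ k))%N -> (N * 2 ^ k <= E)%N ->
  3 < \sum_(t < 2 ^ k) vv b p (E + t) ->
  exists D1 : nat, exists I1 : {set 'I_m},
    [/\ (E <= D1)%N, (D1 < p)%N & GoodI alpha b (N * 2 ^ k) I1].
Proof.
move=> hw hm a0 aN N0 hN hE hsum.
set K := (2 ^ k)%N.
set l := (N * K)%N.
have K0 : (0 < K)%N by rewrite expn_gt0.
have l0 : (0 < l)%N by rewrite muln_gt0 N0.
have lR : (0:R) < l%:R by rewrite ltr0n.
have il0 : (0:R) < 1 / l%:R by rewrite divr_gt0.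
have Kl : (1 / l%:R) *+ K <= (1 : R).
  rewrite -mulr_natr /l natrM mul1r invfM -mulrA mulVf ?pnatr_eq0 -?lt0n // mulr1.
  by rewrite invf_le1 ?ler1n ?ltr0n.
pose P := fun t => (t < K)%N && (1 / l%:R <= vv b p (E + t)).
have exP : exists t, P t.
  case: (boolp.pselect (exists t, P t)) => // hn; exfalso.
  have : \sum_(t < K) vv b p (E + t) <= \sum_(t < K) (1 / l%:R : R).
    apply: ler_sum => t _; apply: ltW; rewrite ltNge; apply/negP => h.
    by apply: hn; exists t; rewrite /P ltn_ord h.
  rewrite sumr_const card_ord => h.
  by have := lt_le_trans hsum (le_trans h Kl); lra.
case: (ex_minnP exP) => t1 /andP [t1K ht1] mint1.
set D1 := E + t1.
have vpos : 0 < vv b p D1 := lt_le_trans il0 ht1.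
have sh0 : (0 < #|shell b p D1|)%N.
  by rewrite lt0n; apply/negP => /eqP h; move: vpos; rewrite /vv h mul0r ltxx.
have D1p : (D1 < p)%N.
  move: sh0; rewrite card_gt0 => /set0Pn [i]; rewrite inE => /andP [h1 h2].
  rewrite ltnNge; apply/negP => hp.
  have := le_lt_trans (tau_le R p p D1 hp) h1; rewrite taupp => h3.
  by move: (lt_le_trans h3 (absb_le1 _ _ _ hw i)); rewrite ltxx.
set I1 := [set i | tau R p D1 < `|b i|].
have subI : forall D, (D1 <= D)%N -> {subset shell b p D <= I1}.
  move=> D hD i; rewrite !inE => /andP [h1 _]; exact: le_lt_trans (tau_le R p _ _ hD) h1.
have sD1 : shell b p D1 \subset I1 by apply/fintype.subsetP; exact: subI.
have n1pos : (0 < #|I1|)%N by apply: leq_trans sh0 (subset_leq_card sD1).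
have n1le : #|I1|%:R * tau R p D1 <= 1.
  apply: le_trans (hw _ (tau_gt0 R p D1)); apply: ler_wpM2r; first exact: ltW (tau_gt0 _ _ _).
  rewrite ler_nat.
  apply: subset_leq_card; apply/fintype.subsetP => i; rewrite !inE; exact: ltW.
have n1ge : 1 / l%:R <= #|I1|%:R * tau R p D1.
  apply: le_trans ht1 _; rewrite /vv; apply: ler_wpM2r; first exact: ltW (tau_gt0 _ _ _).
  rewrite ler_nat.
  exact: subset_leq_card sD1.
exists D1, I1; split => //; first by rewrite leq_addr.
move=> lam hlam.
pose G := fun D => shell b p D :&: [set i | 2 * `|lam i| <= `|b i|].
have exG : exists2 t, (t1 <= t < K)%N & 1 / l%:R <= #|G (E + t)%N|%:R * tau R p (E + t).
  case: (boolp.pselect (exists2 t, (t1 <= t < K)%N &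
     1 / l%:R <= #|G (E + t)%N|%:R * tau R p (E + t))) => // hn; exfalso.
  have key : forall t : 'I_K, vv b p (E + t) <= 1 / l%:R + 2 * mu b p I1 lam (E + t).
    move=> t.
    have mu0 : 0 <= mu b p I1 lam (E + t) by apply: sumr_ge0 => i _; case: ifP.
    case: (ltnP t t1) => htt.
      have nP : ~~ P t by apply/negP => /mint1; rewrite leqNgt htt.
      move: nP; rewrite /P ltn_ord /= -ltNge => h.
      by apply: le_trans (ltW h) _; rewrite lerDl mulr_ge0.
    have hD : (D1 <= E + t)%N by rewrite leq_add2l.
    have hb := bad_bound _ _ b p I1 lam (E + t) (subI _ hD).
    have hg : #|G (E + t)%N|%:R * tau R p (E + t) < 1 / l%:R.
      rewrite ltNge; apply/negP => h; apply: hn; exists t => //; by rewrite htt ltn_ord.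
    rewrite /vv -(cardsID [set i | 2 * `|lam i| <= `|b i|] (shell b p (E + t))) natrD mulrDl.
    exact: lerD (ltW hg) hb.
  have h1 : \sum_(t < K) vv b p (E + t) <=
      \sum_(t < K) (1 / l%:R + 2 * mu b p I1 lam (E + t)).
    by apply: ler_sum => t _; exact: key t.
  rewrite big_split /= sumr_const card_ord -mulr_sumr in h1.
  have h2 := mu_disj _ _ b p I1 lam E K.
  have : \sum_(t < K) vv b p (E + t) <= 1 + 2 * 1.
    apply: le_trans h1 _; apply: lerD => //; rewrite ler_wpM2l //.
    exact: le_trans h2 hlam.
  by move=> h3; have := lt_le_trans hsum h3; lra.
case: exG => t /andP [htt tK] hG.
set D := (E + t)%N.
have hD : (D1 <= D)%N by rewrite leq_add2l.
have n2pos : (0 < #|G D|)%N.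
  rewrite lt0n; apply/negP => /eqP h; move: hG; rewrite /D h mul0r => h'.
  by move: (lt_le_trans il0 h'); rewrite ltxx.
have GI : G D \subset I1.
  apply/fintype.subsetP => i; rewrite inE => /andP [hi _]; exact: subI hD i hi.
exists (G D); split => //.
- have hl : (l <= D1)%N by apply: leq_trans hE (leq_addr _ _).
  have hk : (l * 2 ^ (D - D1) <= 2 ^ (2 ^ k.+1))%N.
    rewrite expnS mul2n -addnn expnD; apply: leq_mul => //.
    rewrite leq_exp2l // /D /D1 subnDl; apply: ltnW; apply: leq_ltn_trans (leq_subr _ _) tK.
  have ha : (2 ^ k.+1)%:R <= D1%:R * alpha.
    rewrite expnS natrM mulrC.
    apply: le_trans (_ : K%:R * (alpha * N%:R) <= _).
      by rewrite ler_wpM2l.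
    rewrite mulrCA [X in _ <= X]mulrC ler_wpM2l // -natrM ler_nat mulnC.
    exact: hl.
  exact: part_i hm a0 n1pos n2pos (subset_leq_card GI) l0 n1le hG hD hl hk ha.
split.
- move=> i; rewrite inE => hi; apply: ltW; apply: le_lt_trans hi.
  exact: inv_bound l0 n1pos n1ge.
- move=> i; rewrite inE => /andP [hi _]; move: hi; rewrite inE => /andP [h1 _].
  apply: ltW; apply: le_lt_trans h1; exact: inv_bound l0 n2pos hG.
- by move=> i; rewrite !inE => /andP [_ h].
Qed.

Lemma sum_widen (R : realType) (v : nat -> R) (x y : nat) :
  (forall D, 0 <= v D) -> (x <= y)%N -> \sum_(D < x) v D <= \sum_(D < y) v D.
Proof.
move=> v0 hxy; rewrite -(subnKC hxy) big_split_ord /= lerDl.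
by apply: sumr_ge0 => i _.
Qed.

Lemma inner_win (R : realType) (v : nat -> R) (a c n : nat) :
  (forall i, (i < n)%N -> \sum_(t < c) v (a + i * c + t)%N <= 3) ->
  \sum_(D < a + n * c) v D <= \sum_(D < a) v D + 3 * n%:R.
Proof.
elim: n => [|n IH] h; first by rewrite mul0n addn0 mulr0 addr0.
rewrite mulSnr addnA big_split_ord /=.
apply: le_trans (lerD (IH (fun i hi => h i (ltnW hi))) (h n (ltnSn n))) _.
by rewrite -addrA lerD2l -[n.+1]addn1 natrD mulrDr mulr1.
Qed.

Lemma window_total (R : realType) (v : nat -> R) (N k0 n : nat) :
  (forall D, v D <= 1) ->
  (forall k i, (k0 <= k < k0 + n)%N -> (i < N)%N ->
     \sum_(t < 2 ^ k) v (N * 2 ^ k + i * 2 ^ k + t)%N <= 3) ->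
  \sum_(D < N * 2 ^ (k0 + n)) v D <= (N * 2 ^ k0)%:R + 3 * (N * n)%:R.
Proof.
move=> v1; elim: n => [|n IH] h.
  rewrite addn0 muln0 mulr0 addr0.
  apply: le_trans (_ : \sum_(D < N * 2 ^ k0) (1 : R) <= _).
    by apply: ler_sum => D _.
  by rewrite sumr_const card_ord.
have e : (N * 2 ^ (k0 + n.+1) = N * 2 ^ (k0 + n) + N * 2 ^ (k0 + n))%N.
  by rewrite addnS expnS mulnCA mul2n -addnn.
rewrite e.
apply: le_trans (inner_win R v (N * 2 ^ (k0 + n)) (2 ^ (k0 + n)) N _) _.
  by move=> i hi; apply: h => //; rewrite leq_addr addnS ltnSn.
have IH' : \sum_(D < N * 2 ^ (k0 + n)) v D <= (N * 2 ^ k0)%:R + 3 * (N * n)%:R.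
  apply: IH => k i /andP [h1 h2] hi; apply: h => //.
  by rewrite h1 addnS ltnS ltnW.
apply: le_trans (lerD IH' (lexx _)) _.
by rewrite -addrA lerD2l -mulrDr ler_wpM2l // -natrD ler_nat mulnS addnC.
Qed.

Lemma ln2_gt0 (R : realType) : (0 : R) < ln 2.
Proof. by rewrite ln_gt0 // ltr1n. Qed.

Lemma log2_exp (R : realType) n : log2 (2 ^+ n : R) = n%:R.
Proof.
rewrite /log2 lnXn // mulrnAl divff //.
by rewrite gt_eqF // ln2_gt0.
Qed.

Lemma log2_le (R : realType) (x y : R) : 0 < x -> x <= y -> log2 x <= log2 y.
Proof.
move=> x0 xy; rewrite /log2 ler_pM2r ?invr_gt0 ?ln2_gt0 //.
by rewrite ler_ln ?posrE // (lt_le_trans x0).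
Qed.

Lemma log2_lt (R : realType) (x y : R) : 0 < x -> x < y -> log2 x < log2 y.
Proof.
move=> x0 xy; rewrite /log2 ltr_pM2r ?invr_gt0 ?ln2_gt0 //.
by rewrite ltr_ln ?posrE // (lt_trans x0).
Qed.

Lemma two_k k : (0 < k)%N -> (2 * k <= 2 ^ k)%N.
Proof.
elim: k => // k IH _; case: (posnP k) => [->|k0] //.
have h2 : (2 <= 2 ^ k)%N by rewrite -{1}(expn1 2) leq_exp2l.
have h := IH k0; rewrite expnS; lia.
Qed.

Lemma N_le_exp N k : (0 < N)%N -> (N <= k)%N -> (N * 2 ^ k <= 2 ^ (2 ^ k))%N.
Proof.
move=> N0 Nk.
have k0 : (0 < k)%N by apply: leq_trans N0 Nk.
apply: leq_trans (_ : 2 ^ k * 2 ^ k <= _)%N.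
  by apply: leq_mul => //; apply: leq_trans Nk (ltnW (ltn_expl _ _)).
by rewrite -expnD addnn -mul2n leq_exp2l // two_k.
Qed.

Theorem proposition3p1 (R : realType) (alpha A : R) :
  0 < alpha < 1 -> 0 < A ->
  exists C : R, forall (m : nat) (b : 'I_m -> R),
    (4 <= m)%N ->
    weak_l1_norm b <= 1 ->
    C * (log2 (log2 (m%:R : R))) ^+ 2 <= l1_norm b ->
    exists (l : nat) (I1 : {set 'I_m}),
      [/\ (0 < l)%N,
          A * log2 (log2 (m%:R : R)) <= l%:R,
          l%:R <= log2 (m%:R : R) &
          forall lambda : 'I_m -> R,
            \sum_(i in I1) `|lambda i| <= 1 ->
            exists I2 : {set 'I_m},
              [/\ I2 \subset I1,
                  (* (i) *)
                  [/\ powR (2 : R) (l%:R / 2) <= m%:R / #|I1|%:R,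
                       (m%:R / #|I1|%:R : R) <= m%:R / #|I2|%:R &
                       m%:R / #|I2|%:R <= powR (m%:R / #|I1|%:R : R) (1 + alpha)] &
                  (* (ii) *)
                  [/\ (forall i, i \in I1 -> (1 / (l%:R * #|I1|%:R) : R) <= `|b i|),
                       (forall i, i \in I2 -> (1 / (l%:R * #|I2|%:R) : R) <= `|b i|) &
                       (forall i, i \in I2 -> 2 * `|lambda i| <= `|b i|)]]].
Proof.
move=> /andP [a0 a1] A0.
set N := (Num.truncn (2 / alpha)).+2.
have N0 : (0 < N)%N by [].
have hN : 2 <= alpha * N%:R.
  have := truncnS_gt (2 / alpha); rewrite ltr_pdivrMr // => h.
  rewrite mulrC; apply: ltW; apply: (lt_le_trans h); apply: ler_wpM2r; first exact: ltW a0.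
  by rewrite ler_nat.
set a := (Num.truncn A).+1.
have hA : A <= (2 ^ a)%:R.
  apply: ltW; apply: lt_le_trans (truncnS_gt A) _; rewrite ler_nat.
  exact: ltnW (ltn_expl _ _).
set c1 := (N * 2 ^ (N + a + 1))%N.
exists ((2 * (c1 + 6 * N))%:R + 3).
move=> m b hm hw hC.
have hw' := weak_card R m b hw.
set p := trunc_log 2 m.
have m0 : (0 < m)%N by apply: leq_trans hm.
have hp1 : (2 ^ p <= m)%N := trunc_logP (isT : (1 < 2)%N) m0.
have hp2 : (m < 2 ^ p.+1)%N := trunc_log_ltn m (isT : (1 < 2)%N).
have p2 : (2 <= p)%N.
  case: (leqP 2 p) => // h.
  have : (2 ^ p.+1 <= 2 ^ 2)%N by rewrite leq_exp2l.
  move: hm hp2; rewrite (_ : 2 ^ 2 = 4)%N //; lia.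
set P := trunc_log 2 p.
have hP1 : (2 ^ P <= p)%N := trunc_logP (isT : (1 < 2)%N) (leq_trans (isT : (0 < 2)%N) p2).
have hP2 : (p < 2 ^ P.+1)%N := trunc_log_ltn p (isT : (1 < 2)%N).
have P1 : (1 <= P)%N.
  case: (posnP P) => h //; move: hP2; rewrite h; lia.
set q := (trunc_log 2 P).+1.
have hq1 : (P < 2 ^ q)%N := trunc_log_ltn P (isT : (1 < 2)%N).
have hq2 : (2 ^ q <= 2 * P)%N.
  by rewrite /q expnS leq_mul2l /= trunc_logP.
set k0 := (N + a + q)%N.
set L := log2 (m%:R : R).
set LL := log2 L.
have Lp : p%:R <= L.
  rewrite -log2_exp; apply: log2_le; first exact: exprn_gt0.
  by rewrite -natrX ler_nat.
have Lp2 : L < p.+1%:R.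
  rewrite -log2_exp; apply: log2_lt; first by rewrite ltr0n.
  by rewrite -natrX ltr_nat.
have L0 : 0 < L by apply: lt_le_trans Lp; rewrite ltr0n; apply: leq_trans p2.
have LLP : P%:R <= LL.
  rewrite -log2_exp; apply: log2_le; first exact: exprn_gt0.
  by apply: le_trans Lp; rewrite -natrX ler_nat.
have LLP2 : LL < P.+1%:R.
  rewrite -log2_exp; apply: log2_lt => //.
  by apply: lt_le_trans Lp2 _; rewrite -natrX ler_nat.
have LL1 : 1 <= LL by apply: le_trans LLP; rewrite ler1n.
case: (boolp.pselect (exists k i, [/\ (k0 <= k < k0 + P.+1)%N, (i < N)%N &
    3 < \sum_(t < 2 ^ k) vv b p (N * 2 ^ k + i * 2 ^ k + t)%N])) => [[k [i [hk hi hs]]] | hn].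
  have Nk : (N <= k)%N.
    by move: hk => /andP [h _]; apply: leq_trans h; rewrite /k0 -addnA leq_addr.
  have [D1 [I1 [hE hD1 hG]]] := good_window R alpha m b p N k (N * 2 ^ k + i * 2 ^ k)
    hw' hp1 (ltW a0) hN N0 (N_le_exp N k N0 Nk) (leq_addr _ _) hs.
  exists (N * 2 ^ k)%N, I1; split => //.
  - by rewrite muln_gt0 N0 expn_gt0.
  - have h1 : (2 ^ a * P.+1 <= N * 2 ^ k)%N.
      apply: leq_trans (_ : 2 ^ k <= _)%N; last by rewrite leq_pmull.
      apply: leq_trans (_ : 2 ^ a * 2 ^ q <= _)%N; first by rewrite leq_mul2l hq1 orbT.
      rewrite -expnD leq_exp2l //; move: hk => /andP [h _]; apply: leq_trans h.
      by rewrite /k0 -addnA leq_addl.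
    apply: le_trans (_ : (2 ^ a)%:R * P.+1%:R <= _); last by rewrite -natrM ler_nat.
    apply: ler_pM => //; [exact: ltW | exact: le_trans ler01 LL1 | exact: ltW].
  - apply: le_trans Lp; rewrite ler_nat; apply: ltnW; apply: leq_ltn_trans hD1.
    by apply: leq_trans hE; rewrite leq_addr.
exfalso.
have hwin := window_total R (vv b p) N k0 P.+1 (fun D => vv_le1 R m b p D hw').
have hwin2 : \sum_(D < N * 2 ^ (k0 + P.+1)) vv b p D <=
    (N * 2 ^ k0)%:R + 3 * (N * P.+1)%:R.
  apply: hwin => k i hk hi; rewrite leNgt; apply/negP => h; apply: hn.
  by exists k, i; split.
have hsum1 : \sum_(D < p) vv b p D <= \sum_(D < N * 2 ^ (k0 + P.+1)) vv b p D.
  apply: sum_widen; first by move=> D; exact: vv_ge0.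
  apply: leq_trans (ltnW hP2) _; apply: leq_trans (_ : 2 ^ (k0 + P.+1) <= _)%N.
    by rewrite leq_exp2l // leq_addl.
  by rewrite leq_pmull.
have hbnd : ((N * 2 ^ k0) + 3 * (N * P.+1) <= (c1 + 6 * N) * P)%N.
  have ek : (2 ^ k0 = 2 ^ (N + a) * 2 ^ q)%N by rewrite /k0 expnD.
  have ec : (c1 = N * 2 ^ (N + a) * 2)%N by rewrite /c1 expnD expn1 mulnA.
  rewrite ek ec.
  have := leq_mul (leqnn (N * 2 ^ (N + a))) hq2.
  move: (2 ^ (N + a))%N (2 ^ q)%N => X Y h.
  rewrite mulnDl mulnA; apply: leq_add.
    by rewrite -[(N * X * 2 * P)%N]mulnA.
  rewrite mulnCA [(6 * N)%N]mulnC -mulnA leq_pmul2l //.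
  by rewrite -[6%N]/(3 * 2)%N -mulnA leq_pmul2l // mul2n -addnn -addn1 leq_add2l.
have hS : \sum_(D < p) vv b p D <= ((c1 + 6 * N) * P)%:R.
  apply: le_trans hsum1 _; apply: le_trans hwin2 _.
  by rewrite -natrM -natrD ler_nat.
have hmass := mass_bound R m b p hw'.
have hT : m%:R * tau R p 0 < 2.
  rewrite /tau expr0 mul1r -ltr_pdivlMr ?invr_gt0 ?exprn_gt0 // invrK.
  by rewrite -natrX -natrM ltr_nat -expnS.
move: hC; rewrite /l1_norm => hC.
set K := (c1 + 6 * N)%:R : R.
have K0 : 0 <= K by rewrite ler0n.
have hS' : \sum_(D < p) vv b p D <= K * P%:R by rewrite /K -natrM.
have hC' : (2 * K + 3) * LL ^+ 2 <= \sum_(i < m) `|b i|.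
  by move: hC; rewrite /K natrM.
have hKP : K * P%:R <= K * LL by rewrite ler_wpM2l.
have hLL2 : LL <= LL ^+ 2 by rewrite expr2 ler_peMr // (le_trans ler01).
have hA2 : (2 * K + 3) * LL <= (2 * K + 3) * LL ^+ 2.
  by rewrite ler_wpM2l // addr_ge0 // mulr_ge0.
have h1 : 2 * (K * LL) + 3 * LL <= \sum_(i < m) `|b i|.
  apply: le_trans hC'; apply: le_trans hA2.
  by rewrite (_ : (2 * K + 3) * LL = 2 * (K * LL) + 3 * LL) //; ring.
have h2 : 2 * \sum_(D < p) vv b p D <= 2 * (K * LL).
  by rewrite ler_wpM2l //; apply: le_trans hS' hKP.
move: h1 h2 hmass hT LL1.
move: (\sum_(i < m) `|b i|) (\sum_(D < p) vv b p D) (m%:R * tau R p 0) (K * LL).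
move=> x1 x2 x3 x4; lra.
Qed.
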